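(* Let $t\in T$ with $t>0$, and assume each source is present on a contiguous run of time steps: if $n\in A_{t_1}$ and $n\in A_{t_3}$ with $t_1\le t_2\le t_3$ in $T$, then $n\in A_{t_2}$. Let $M_{t-\delta}$ be a gated input-set model with registered set $R$ and thresholds $(\theta^\alpha_n,\theta^\omega_n)_{n\in R}$ such that (i) $M_{t-\delta}$ has RCS at $t-\delta$, (ii) $\theta^\alpha_n,\theta^\omega_n\le t-\delta$ for all $n\in R$, and (iii) $R\subseteq\bigcup_{t'\in T,\,t'\le t-\delta}A_{t'}$. Suppose no new source is introduced at $t$, i.e. $A_t\subseteq A_{t-\delta}$ (zero or more sources may be removed). Define $M_t$ from $M_{t-\delta}$ by setting $\theta^\omega_n=t$ for every $n\in A_t$ and leaving all other thresholds and the registered set unchanged. Then $M_t$ accurately models time $t$ and has RCS at $t$ (and all its thresholds are $\le t$).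
   Context: Time steps form the set $T=\{0,\delta,2\delta,\dots\}$ for a fixed time step size $\delta>0$ (so $\min T=0$). Sources (e.g. agents) are identified by natural numbers. At each $t\in T$ a finite set $A_t\subseteq\mathbb{N}$ of sources is present, and each present source $n\in A_t$ supplies a value $x_n(t)$ of a fixed type $\mathcal{T}$. The true input set at time $t$ is $S(t)=\{(n,x_n(t)) : n\in A_t\}\subseteq \mathbb{N}\times\mathcal{T}$. A gated input-set model $M$ consists of a finite set $R\subseteq\mathbb{N}$ of registered sources and, for each $n\in R$, two time thresholds $\theta^\alpha_n,\theta^\omega_n\in T$ (parameters of two time-conditional variables). The gated contribution of $n\in R$ at time $t$ is $g_n(t)=\{(n,x_n(t))\}$ if $\theta^\alpha_n\le t\le\theta^\omega_n$, and $g_n(t)=\emptyset$ otherwise. The input set computed by $M$ at time $t$ is $S_M(t)=\bigcup_{n\in R} g_n(t)$ (realised by a chain of union variables starting from a socket variable with degenerate distribution at $\emptyset$). $M$ accurately models time $t$ if $S_M(t)=S(t)$. A model $M_t$ has retrospective causal stationarity (RCS) at $t$ if it accurately models $t$ and every $t'\in T$ with $t'<t$. *)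

(* Defs.v *)
(* Time steps T = {0, delta, 2 delta, ...} with delta > 0 are represented by
   their index k : nat (t = k * delta); the order on T is the order on indices,
   t - delta corresponds to k.-1 (for k > 0). *)
From mathcomp Require Import all_boot.
Set Implicit Arguments. Unset Strict Implicit. Unset Printing Implicit Defensive.

Section Defs.
Variable V : Type.

(* Environment: A k = (finite) set of present sources at time index k,
   x n k = value supplied by source n at time index k. *)

Definition true_input (A : nat -> seq nat) (x : nat -> nat -> V) (k : nat)
  : nat * V -> Prop :=
  fun p => p.1 \in A k /\ p.2 = x p.1 k.

Record model := Model {
  reg : seq nat;
  th_alpha : nat -> nat;
  th_omega : nat -> nat
}.

Definition gated (x : nat -> nat -> V) (M : model) (n k : nat) : nat * V -> Prop :=
  fun p => th_alpha M n <= k <= th_omega M n /\ p = (n, x n k).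

Definition model_input (x : nat -> nat -> V) (M : model) (k : nat) : nat * V -> Prop :=
  fun p => exists2 n, n \in reg M & gated x M n k p.

Definition accurate (A : nat -> seq nat) (x : nat -> nat -> V) (M : model) (k : nat) :=
  forall p, model_input x M k p <-> true_input A x k p.

Definition RCS (A : nat -> seq nat) (x : nat -> nat -> V) (M : model) (k : nat) :=
  accurate A x M k /\ forall k', k' < k -> accurate A x M k'.

Definition extend_model (A : nat -> seq nat) (M : model) (k : nat) : model :=
  Model (reg M) (th_alpha M) (fun n => if n \in A k then k else th_omega M n).

End Defs.

(* Main.v *)
Require Import Defs.
From mathcomp Require Import all_boot.

Theorem lemma3 (V : Type) (A : nat -> seq nat) (x : nat -> nat -> V)
  (M : model) (k : nat) :
  0 < k ->
  (* contiguous presence *)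
  (forall (n t1 t2 t3 : nat), t1 <= t2 -> t2 <= t3 ->
     n \in A t1 -> n \in A t3 -> n \in A t2) ->
  (* (i) RCS at t - delta *)
  RCS A x M k.-1 ->
  (* (ii) thresholds <= t - delta *)
  (forall n, n \in reg M -> th_alpha M n <= k.-1 /\ th_omega M n <= k.-1) ->
  (* (iii) R is contained in the union of A_t' for t' <= t - delta *)
  (forall n, n \in reg M -> exists2 k', k' <= k.-1 & n \in A k') ->
  (* no new source at t *)
  {subset A k <= A k.-1} ->
  let M' := extend_model A M k in
  accurate A x M' k /\ RCS A x M' k /\
  (forall n, n \in reg M' -> th_alpha M' n <= k /\ th_omega M' n <= k).
Proof.
move=> k0 _ [Hacc Hprev] Hth _ Hsub M'.
have key : forall n, n \in A k ->
  [/\ n \in reg M, th_alpha M n <= k.-1 & th_omega M n = k.-1].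
  move=> n Hn.
  have := (proj2 (Hacc (n, x n k.-1))) (conj (Hsub _ Hn) erefl).
  case=> m Hm [/andP [H1 H2] [E _]]; subst m.
  have [_ H3] := Hth n Hm.
  split => //; apply/eqP; rewrite eqn_leq H3 H2.
  done.
have accK : accurate A x M' k.
  move=> [n v]; split.
  - case=> m Hm [/andP [H1 H2] [E1 E2]]; subst m v.
    rewrite /= /true_input /=; split => //.
    move: H2; rewrite /M' /= ; case: ifP => // _ H2.
    have [_ H3] := Hth n Hm.
    have : k <= k.-1 by apply: leq_trans H2 H3.
    by rewrite leqNgt ltn_predL k0.
  - rewrite /true_input /= => -[Hn ->].
    have [Hr Ha Ho] := key n Hn.
    exists n => //; split => //.
    rewrite /M' /= Hn leqnn andbT.
    by apply: leq_trans Ha (leq_pred k).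
split => //; split.
  split => // k' Hk'.
  have gate : forall n, n \in reg M ->
      (th_alpha M' n <= k' <= th_omega M' n) = (th_alpha M n <= k' <= th_omega M n).
    move=> n Hn; rewrite /M' /=; case: ifP => // HA.
    have [_ _ ->] := key n HA.
    have h1 : k' <= k.-1 by rewrite -ltnS prednK.
    by rewrite h1 (ltnW Hk').
  have HP : accurate A x M k'.
    case: (ltnP k' k.-1) => h; first exact: Hprev.
    have -> : k' = k.-1.
      by apply/eqP; rewrite eqn_leq h andbT -ltnS prednK.
    exact: Hacc.
  move=> p; split.
  - case=> m Hm [Hg Ep]; apply/HP; exists m => //; split => //; by rewrite -gate.
  - move/HP; case=> m Hm [Hg Ep]; exists m => //; split => //; by rewrite gate.
move=> n Hn; rewrite /M' /=.
have [H1 H2] := Hth n Hn.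
split; first by apply: leq_trans H1 (leq_pred k).
case: ifP => // _; by apply: leq_trans H2 (leq_pred k).
Qed.
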